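(* Let $X$ be a separable metric space with Borel $\sigma$-algebra $\mathcal B(X)$ and universal $\sigma$-algebra $\mathscr U(X)$, and let $\mathbb P$ be the completion of a (probability) measure on $\mathcal B(X)$ restricted to $\mathscr U(X)$. Let $A\mapsto A^\epsilon$ be a set operation on subsets of $X$ such that $A^\epsilon\in\mathscr U(X)$ whenever $A\in\mathscr U(X)$, and such that for every sequence of sets $\{A_n\}$, $$\bigcup_{n\in\mathbb N}A_n^\epsilon=\Big(\bigcup_{n\in\mathbb N}A_n\Big)^\epsilon,\qquad \bigcap_{n\in\mathbb N}A_n^\epsilon\supseteq\Big(\bigcap_{n\in\mathbb N}A_n\Big)^\epsilon.$$ Define $R^\epsilon(A)=\int(1-\eta(x))\mathbb 1_{A^\epsilon}(x)+\eta(x)\mathbb 1_{(A^C)^\epsilon}(x)\,d\mathbb P$ for $A\in\mathscr U(X)$. Assume that, given any decreasing minimizing sequence $\{B_n\}\subseteq\mathscr U(X)$ of $R^\epsilon$, one can find a decreasing minimizing sequence $\{C_n\}\subseteq\mathscr U(X)$ for which $\bigcap_{n=1}^\infty C_n^\epsilon\subseteq\big(\bigcap_{n=1}^\infty C_n\big)^\epsilon$ up to a $\mathbb P$-null set. Then there exists a minimizer of $R^\epsilon$ in $\mathscr U(X)$.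
   Context: $\mathcal D$ is a probability distribution on $X\times\{-1,+1\}$, $\eta(x)=\mathcal D(Y=+1\mid x)\in[0,1]$ is measurable, and $\mathbb P$ is the marginal on $X$. $\mathscr U(X)$ is the intersection over all $\sigma$-finite Borel measures $\nu$ on $X$ of the completion $\sigma$-algebras $\mathcal L_\nu(X)$. A sequence $\{A_n\}\subseteq\mathscr U(X)$ is minimizing if $R^\epsilon(A_n)\to\inf_{S\in\mathscr U(X)}R^\epsilon(S)$; it is decreasing if $A_{n+1}\subseteq A_n$. *)

(* Defs.v *)
From HB Require Import structures.
From mathcomp Require Import all_boot all_order all_algebra.
From mathcomp Require Import all_classical all_reals all_analysis.
Set Implicit Arguments. Unset Strict Implicit. Unset Printing Implicit Defensive.
Import Order.TTheory GRing.Theory Num.Theory.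
Local Open Scope classical_set_scope.
Local Open Scope ring_scope.

Definition separable_space (T : topologicalType) : Prop :=
  exists D : set T, countable D /\ dense D.

Definition borel_type (T : ptopologicalType) : measurableType _ := g_sigma_algebraType (@open T).

Definition completion_sets (R : realType) (T : ptopologicalType)
    (nu : {measure set (borel_type T) -> \bar R}) (A : set T) : Prop :=
  exists B : set (borel_type T), measurable B /\
    nu.-negligible ((A `\` B) `|` (B `\` A)).

Definition universally_measurable (R : realType) (T : ptopologicalType)
    (A : set T) : Prop :=
  forall nu : {measure set (borel_type T) -> \bar R},
    sigma_finite setT nu -> completion_sets nu A.

(* The completion of a (probability) measure P on the Borel sets, realised as
   the Caratheodory extension of P (whose sigma-algebra is the P-completion of
   the Borel sigma-algebra, which contains U(X)). *)
Notation completed_P P := (@completed_measure_extension _ _ _ P).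

Definition adv_risk (R : realType) (T : ptopologicalType)
    (P : probability (borel_type T) R) (eta : T -> R)
    (eps : set T -> set T) (A : set T) : \bar R :=
  (\int[completed_P P]_x
     ((1 - eta x) * \1_(eps A) x + eta x * \1_(eps (~` A)) x)%:E)%E.

(* Main.v *)
Require Import Defs.
From HB Require Import structures.
From mathcomp Require Import all_boot all_order all_algebra.
From mathcomp Require Import all_classical all_reals all_analysis.
From mathcomp Require Import measurable_realfun.
From mathcomp Require Import lra zify.
Import Order.TTheory GRing.Theory Num.Theory.
Local Open Scope classical_set_scope.
Local Open Scope ring_scope.
Set Implicit Arguments. Unset Strict Implicit. Unset Printing Implicit Defensive.
Section LSC.
Local Open Scope ereal_scope.
Context d (T : measurableType d) (R : realType).
Variable mu : {measure set T -> \bar R}.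

Lemma lsc_integral (f : T -> \bar R) (g : (T -> \bar R)^nat) (c : \bar R) :
  measurable_fun [set: T] f -> (forall n, measurable_fun [set: T] (g n)) ->
  (forall x, 0 <= f x) -> (forall n x, 0 <= g n x) ->
  (forall x, exists N, forall n, (N <= n)%N -> f x <= g n x) ->
  (forall n, \int[mu]_x g n x <= c) ->
  \int[mu]_x f x <= c.
Proof.
move=> mf mg f0 g0 ev gc.
have mli : measurable_fun [set: T] (fun x => limn_einf (g^~ x)).
  have -> : (fun x => limn_einf (g^~ x)) =
            (fun x => - limn_esup ((fun n x => - g n x)^~ x)).
    apply/funext => x.
    have -> : (fun n => - g n x) = -%E \o (g^~ x) by [].
    by rewrite limn_esupN oppeK.
  apply: measurableT_comp => //; apply: measurable_fun_limn_esup => n.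
  exact: measurableT_comp.
apply: (@le_trans _ _ (\int[mu]_x limn_einf (g^~ x))).
  apply: ge0_le_integral => // x _.
  have [N HN] := ev x.
  rewrite limn_einf_lim; apply: lime_ge; first exact: is_cvg_einfs.
  exists N => // n /= Nn.
  apply: le_ereal_inf_tmp => _ [k /= nk <-]; apply: HN.
  exact: leq_trans nk.
apply: le_trans; first exact: fatou.
rewrite limn_einf_lim; apply: lime_le; first exact: is_cvg_einfs.
apply: nearW => n.
apply: ge_ereal_inf; exists (\int[mu]_x g n x) => //.
by exists n => /=.
Qed.
End LSC.
Section UM.
Variables (R : realType) (X : ptopologicalType).

Lemma cs_C (nu : {measure set (borel_type X) -> \bar R}) A :
  completion_sets nu A -> completion_sets nu (~` A).
Proof.
move=> [B [mB nB]]; exists (~` B); split; first exact: measurableC.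
apply: negligibleS nB => x /=.
move=> [[h1 h2]|[h1 h2]]; case: (pselect (A x)) => ?; case: (pselect (B x)) => ?; by [left|right|exfalso].
Qed.

Lemma cs_bigcup (nu : {measure set (borel_type X) -> \bar R}) (A : nat -> set X) :
  (forall n, completion_sets nu (A n)) -> completion_sets nu (\bigcup_n A n).
Proof.
move=> /choice[B HB]; exists (\bigcup_n B n); split.
  by apply: bigcupT_measurable => n; case: (HB n).
apply: (@negligibleS _ _ _ nu (\bigcup_n ((A n `\` B n) `|` (B n `\` A n)))).
  move=> x [[[n _ Ax] nB]|[[n _ Bx] nA]].
  - exists n => //; left; split => // Bn; apply: nB; by exists n.
  - exists n => //; right; split => // An; apply: nA; by exists n.
by apply: negligible_bigcup => n; case: (HB n).
Qed.

Lemma um_C (A : set X) : universally_measurable R A -> universally_measurable R (~` A).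
Proof. by move=> h nu snu; apply: cs_C; apply: h. Qed.

Lemma um_bigcup (A : nat -> set X) :
  (forall n, universally_measurable R (A n)) ->
  universally_measurable R (\bigcup_n A n).
Proof. by move=> h nu snu; apply: cs_bigcup => n; apply: h. Qed.

Lemma um_bigcap (A : nat -> set X) :
  (forall n, universally_measurable R (A n)) ->
  universally_measurable R (\bigcap_n A n).
Proof.
move=> h; rewrite -[X in universally_measurable _ X]setCK setC_bigcap.
by apply: um_C; apply: um_bigcup => n; apply: um_C.
Qed.

Lemma um_I (A B : set X) : universally_measurable R A -> universally_measurable R B ->
  universally_measurable R (A `&` B).
Proof.
move=> hA hB.
have -> : A `&` B = \bigcap_n (if n is 0%N then A else B).
  apply/seteqP; split => x.
    by move=> [Ax Bx] [|n] _.
  by move=> h; split; [apply: (h 0%N)|apply: (h 1%N)].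
by apply: um_bigcap => -[|n].
Qed.

Lemma um_U (A B : set X) : universally_measurable R A -> universally_measurable R B ->
  universally_measurable R (A `|` B).
Proof.
move=> hA hB; rewrite -[A `|` B]setCK setCU.
by apply: um_C; apply: um_I; apply: um_C.
Qed.

Lemma um_T : universally_measurable R (@setT X).
Proof.
move=> nu _; exists setT; split => //.
by apply: negligibleS (negligible_set0 nu) => x /= [[_ h]|[_ h]].
Qed.

End UM.
Section CM.
Variables (R : realType) (X : ptopologicalType) (P : probability (borel_type X) R).
Local Notation I := (caratheodory_type (P^*)%mu).

Lemma borel_meas (B : set X) : measurable (B : set (borel_type X)) ->
  measurable (B : set I).
Proof. by move=> mB; apply: caratheodory_measurable_mu_ext. Qed.

Lemma neg_meas (N : set X) : P.-negligible (N : set (borel_type X)) ->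
  measurable (N : set I).
Proof.
move=> [M [mM PM0 NM]].
apply: measure_is_complete_caratheodory.
exists M; split => //; first exact: borel_meas.
exact: (etrans (measurable_mu_extE _ mM) PM0).
Qed.

Lemma um_meas (A : set X) : universally_measurable R A -> measurable (A : set I).
Proof.
move=> hA; have [B [mB nB]] := hA P (sigma_finiteT P).
have h1 : measurable ((A `\` B) : set I).
  by apply: neg_meas; apply: negligibleS nB => x ?; left.
have h2 : measurable ((B `\` A) : set I).
  by apply: neg_meas; apply: negligibleS nB => x ?; right.
have -> : A = (B `\` (B `\` A)) `|` (A `\` B).
  apply/seteqP; split => x.
    by move=> Ax; case: (pselect (B x)) => Bx; [left; split => // -[]|right].
  by move=> [[Bx nBA]|[Ax _]] //; apply: contrapT => nA; apply: nBA.
apply: measurableU => //; apply: measurableD => //; exact: borel_meas.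
Qed.
End CM.

Lemma indic01 (T : Type) (R : realType) (S : set T) (x : T) :
  (\1_S x = 1 :> R /\ S x) \/ (\1_S x = 0 :> R /\ ~ S x).
Proof.
rewrite indicE; case: (pselect (S x)) => h.
  by left; rewrite mem_set.
by right; rewrite memNset.
Qed.

Lemma indic_le (T : Type) (R : realType) (S S' : set T) (x : T) :
  (S x -> S' x) -> \1_S x <= \1_S' x :> R.
Proof.
move=> h; have [[-> Sx]|[-> _]] := indic01 R S x.
  by have [[-> _]|[_ nS]] := indic01 R S' x; [|exfalso; exact: nS (h Sx)].
by have [[-> _]|[-> _]] := indic01 R S' x.
Qed.

Lemma indic_sub (T : Type) (R : realType) (S1 S2 S3 S4 : set T) (x : T) :
  S1 `<=` S3 `&` S4 -> S2 `<=` S3 `|` S4 ->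
  \1_S1 x + \1_S2 x <= \1_S3 x + \1_S4 x :> R.
Proof.
move=> h1 h2.
have [[e1 s1]|[e1 s1]] := indic01 R S1 x;
have [[e2 s2]|[e2 s2]] := indic01 R S2 x;
have [[e3 s3]|[e3 s3]] := indic01 R S3 x;
have [[e4 s4]|[e4 s4]] := indic01 R S4 x;
rewrite e1 e2 e3 e4 ?addr0 ?add0r ?ler01 ?lexx //;
try (by exfalso; case: (h1 x s1));
try (by exfalso; case: (h2 x s2)).
all: by rewrite lerDl ler01.
Qed.

Section Main.
Variables (R : realType) (X : ptopologicalType) (P : probability (borel_type X) R).
Variable eta : X -> R.
Hypothesis eta_meas : measurable_fun setT (eta : borel_type X -> R).
Hypothesis eta01 : forall x, 0 <= eta x <= 1.
Variable eps : set X -> set X.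
Hypothesis eps_U : forall A, universally_measurable R A ->
                     universally_measurable R (eps A).
Hypothesis eps_cup : forall A : nat -> set X,
     \bigcup_n eps (A n) = eps (\bigcup_n A n).

Local Notation I := (caratheodory_type (P^*)%mu).
Local Notation mu := (completed_P P).
Local Notation Rk := (adv_risk P eta eps).
Local Notation um := (@universally_measurable R X).

Definition hf (A : set X) (x : X) : R :=
  (1 - eta x) * \1_(eps A) x + eta x * \1_(eps (~` A)) x.

Lemma RkE A : Rk A = (\int[mu]_x (hf A x)%:E)%E.
Proof. by []. Qed.

Lemma eps_mono A B : A `<=` B -> eps A `<=` eps B.
Proof.
move=> AB x Ax; rewrite -(_ : \bigcup_n (if n is 0%N then A else B) = B).
  by rewrite -eps_cup; exists 0%N.
apply/seteqP; split => y.
  by move=> [[|n] _ h] //; apply: AB.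
by move=> By; exists 1%N.
Qed.

Lemma eps_U2 A B : eps (A `|` B) `<=` eps A `|` eps B.
Proof.
move=> x; rewrite (_ : A `|` B = \bigcup_n (if n is 0%N then A else B)).
  by rewrite -eps_cup => -[[|n] _ h]; [left|right].
apply/seteqP; split => y.
  by move=> [Ay|By]; [exists 0%N|exists 1%N].
by move=> [[|n] _ h]; [left|right].
Qed.

Lemma meta : measurable_fun [set: I] (eta : I -> R).
Proof. by move=> _ Y mY; apply: borel_meas; exact: eta_meas. Qed.

Lemma mhf A : um A -> measurable_fun [set: I] (hf A : I -> R).
Proof.
move=> hA; apply: measurable_funD; apply: measurable_funM.
- by apply: measurable_funB => //; exact: meta.
- by apply: measurable_indic; apply: um_meas; apply: eps_U.
- exact: meta.
- by apply: measurable_indic; apply: um_meas; apply: eps_U; apply: um_C.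
Qed.

Lemma hf_ge0 A x : 0 <= hf A x.
Proof.
have /andP[e0 e1] := eta01 x.
rewrite /hf; apply: addr_ge0; apply: mulr_ge0 => //;
  by rewrite ?subr_ge0 ?indicE ?ler0n.
Qed.

Lemma hf_le1 A x : hf A x <= 1.
Proof.
have /andP[e0 e1] := eta01 x.
rewrite /hf; apply: (@le_trans _ _ ((1 - eta x) * 1 + eta x * 1)).
  apply: lerD; apply: ler_wpM2l => //;
  by rewrite ?subr_ge0 ?indicE ?lern1 ?leq_b1.
by rewrite !mulr1 subrK.
Qed.

Lemma Rk_ge0 A : (0 <= Rk A)%E.
Proof. by apply: integral_ge0 => x _; rewrite lee_fin hf_ge0. Qed.

Lemma Rk_le1 A : um A -> (Rk A <= 1)%E.
Proof.
move=> hA; rewrite RkE.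
apply: (@le_trans _ _ (\int[mu]_x (cst 1%E) x)%E).
  apply: ge0_le_integral => //.
  - by move=> x _; rewrite lee_fin hf_ge0.
  - by apply/measurable_EFinP; exact: mhf.
  - by move=> x _; rewrite lee_fin hf_le1.
rewrite integral_cst // mul1e.
have h := etrans (measurable_mu_extE P (@measurableT _ (borel_type X))) (probability_setT P).
by rewrite le_eqVlt; apply/orP; left; apply/eqP; exact: h.
Qed.

Definition r A := fine (Rk A).

Lemma RkrE A : um A -> Rk A = (r A)%:E.
Proof.
move=> hA; rewrite /r fineK // ge0_fin_numE ?Rk_ge0 //.
exact: (le_lt_trans (Rk_le1 hA) (ltry _)).
Qed.


Lemma submod A B : um A -> um B -> r (A `&` B) + r (A `|` B) <= r A + r B.
Proof.
move=> hA hB; have hI := um_I hA hB; have hU := um_U hA hB.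
have m1 C : um C -> measurable_fun [set: I] (fun x : I => (hf C x)%:E).
  by move=> hC; apply/measurable_EFinP; exact: mhf.
have p1 C : forall x : I, [set: I] x -> (0 <= (hf C x)%:E)%E.
  by move=> x _; rewrite lee_fin hf_ge0.
rewrite -lee_fin !EFinD -!RkrE // !RkE.
rewrite -ge0_integralD; [|exact: measurableT|exact: p1|exact: m1|exact: p1|exact: m1].
rewrite -ge0_integralD; [|exact: measurableT|exact: p1|exact: m1|exact: p1|exact: m1].
apply: ge0_le_integral.
- exact: measurableT.
- by move=> x _; rewrite adde_ge0 // lee_fin hf_ge0.
- by apply: emeasurable_funD; exact: m1.
- by apply: emeasurable_funD; exact: m1.
move=> x _; rewrite -!EFinD lee_fin /hf.
have /andP[e0 e1] := eta01 x.
have h1 : \1_(eps (A `&` B)) x + \1_(eps (A `|` B)) x <=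
          \1_(eps A) x + \1_(eps B) x :> R.
  apply: indic_sub; last exact: eps_U2.
  by move=> y h; split; apply: (eps_mono _ h) => z [].
have h2 : \1_(eps (~` (A `|` B))) x + \1_(eps (~` (A `&` B))) x <=
          \1_(eps (~` A)) x + \1_(eps (~` B)) x :> R.
  apply: indic_sub.
    by move=> y h; split; apply: (eps_mono _ h) => z nz zz; apply: nz; by [left|right].
  by rewrite setCI; exact: eps_U2.
have e0' : 0 <= 1 - eta x by rewrite subr_ge0.
have := ler_wpM2l e0' h1; have := ler_wpM2l e0 h2.
rewrite !mulrDr.
lra.
Qed.
Lemma lsc_r (A : set X) (B : nat -> set X) c : um A -> (forall n, um (B n)) ->
  (forall x, eps A x -> exists N, forall n, (N <= n)%N -> eps (B n) x) ->
  (forall x, eps (~` A) x -> exists N, forall n, (N <= n)%N -> eps (~` B n) x) ->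
  (forall n, r (B n) <= c) -> r A <= c.
Proof.
move=> hA hB ev1 ev2 hc.
rewrite -lee_fin -RkrE // RkE.
apply: (@lsc_integral _ _ _ mu _ (fun n x => (hf (B n) x)%:E)).
- by apply/measurable_EFinP; exact: mhf.
- by move=> n; apply/measurable_EFinP; exact: mhf.
- by move=> x; rewrite lee_fin hf_ge0.
- by move=> n x; rewrite lee_fin hf_ge0.
- move=> x.
  have [N1 H1] : exists N, forall n, (N <= n)%N -> eps A x -> eps (B n) x.
    case: (pselect (eps A x)) => a.
      by have [N HN] := ev1 x a; exists N => n Nn _; exact: HN.
    by exists 0%N => n _ /a.
  have [N2 H2] : exists N, forall n, (N <= n)%N -> eps (~` A) x -> eps (~` B n) x.
    case: (pselect (eps (~` A) x)) => a.
      by have [N HN] := ev2 x a; exists N => n Nn _; exact: HN.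
    by exists 0%N => n _ /a.
  exists (maxn N1 N2) => n; rewrite geq_max => /andP[n1 n2].
  have /andP[e0 e1] := eta01 x.
  rewrite lee_fin /hf; apply: lerD; apply: ler_wpM2l => //.
  + by rewrite subr_ge0.
  + by apply: indic_le; exact: H1.
  + by apply: indic_le; exact: H2.
- by move=> n; rewrite -RkE RkrE // lee_fin.
Qed.

Local Notation inf := (ereal_inf [set Rk S | S in um]).

Lemma inf_fin : inf \is a fin_num.
Proof.
have h0 : (0 <= inf)%E by apply: le_ereal_inf_tmp => _ [S _ <-]; exact: Rk_ge0.
rewrite ge0_fin_numE //; apply: (@le_lt_trans _ _ 1%E); last exact: ltry.
apply: ge_ereal_inf; exists (Rk setT); first by exists setT => //; exact: um_T.
apply: Rk_le1; exact: um_T.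
Qed.

Definition m := fine inf.

Lemma m_le S : um S -> m <= r S.
Proof.
move=> hS; rewrite -lee_fin -RkrE // /m fineK; last exact: inf_fin.
by apply: ereal_inf_lbound; exists S.
Qed.

Lemma m_approx e : 0 < e -> exists S, um S /\ r S < m + e.
Proof.
move=> e0; have [_ [S hS <-] lt] := lb_ereal_inf_adherent e0 inf_fin.
exists S; split => //.
rewrite -lte_fin EFinD -(RkrE hS).
rewrite [X in (_ < X%:E + _)%E]/m fineK //; exact: inf_fin.
Qed.


Fixpoint Fs (T : nat -> set X) (n j : nat) : set X :=
  match j with 0%N => T n | j'.+1 => Fs T n j' `&` T (n + j)%N end.

Lemma FsP T n j x : Fs T n j x <-> forall k, (k <= j)%N -> T (n + k)%N x.
Proof.
elim: j => [|j IH] /=.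
  split; first by move=> h k; rewrite leqn0 => /eqP ->; rewrite addn0.
  by move=> h; have := h 0%N (leqnn 0); rewrite addn0.
split.
  move=> [/IH h1 h2] k; rewrite leq_eqVlt => /orP[/eqP ->//|]; rewrite ltnS.
  exact: h1.
move=> h; split; last exact: h.
by apply/IH => k kj; apply: h; rewrite (leq_trans kj).
Qed.

Lemma um_Fs T n j : (forall k, um (T k)) -> um (Fs T n j).
Proof. by move=> hT; elim: j => [|j IH] //=; apply: um_I. Qed.

Lemma inv_pos (k : nat) : 0 < (k.+1%:R : R)^-1.
Proof. by rewrite invr_gt0 ltr0n. Qed.

Lemma inv_lt (k : nat) : (k.+2%:R : R)^-1 < (k.+1%:R)^-1.
Proof. by rewrite ltf_pV2 ?posrE ?ltr0n // ltr_nat. Qed.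

Lemma inv_le (k l : nat) : (k <= l)%N -> (l.+1%:R : R)^-1 <= (k.+1%:R)^-1.
Proof. by move=> kl; rewrite lef_pV2 ?posrE ?ltr0n // ler_nat. Qed.

Lemma exists_min : exists A, um A /\ forall S, um S -> (Rk A <= Rk S)%E.
Proof.
pose dl k := ((k.+1%:R)^-1 - (k.+2%:R)^-1 : R).
have dl0 k : 0 < dl k by rewrite /dl subr_gt0 inv_lt.
have /choice [T hT] : forall k, exists S, um S /\ r S < m + dl k.
  by move=> k; apply: m_approx.
have umT k : um (T k) by case: (hT k).
have inv1 n j : r (Fs T n j) + ((n + j).+2%:R)^-1 <= m + (n.+1%:R)^-1.
  elim: j => [|j IH].
    rewrite addn0 /=; have [_ h] := hT n; rewrite /dl in h; move: h; set a := (n.+1%:R)^-1; set b := (n.+2%:R)^-1. clearbody a b; lra.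
  rewrite /= addnS.
  have hF := um_Fs n j umT.
  have := submod hF (umT (n + j.+1)%N).
  have := m_le (um_U hF (umT (n + j.+1)%N)).
  have [_ h] := hT (n + j.+1)%N; rewrite /dl !addnS in h.
  move: h IH; rewrite !addnS; set a := ((n + j).+2%:R)^-1; set b := ((n + j).+3%:R)^-1.
  set c := (n.+1%:R)^-1; clearbody a b c.
  lra.
have bF n j : r (Fs T n j) <= m + (n.+1%:R)^-1.
  have := inv1 n j; have := inv_pos (n + j).+1.
  set a := ((n + j).+2%:R)^-1; set c := (n.+1%:R)^-1; clearbody a c; lra.
pose E n := \bigcap_k T (n + k)%N.
have umE n : um (E n) by apply: um_bigcap => k.
have bE n : r (E n) <= m + (n.+1%:R)^-1.
  apply: (@lsc_r _ (Fs T n)) => //.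
  - by move=> j; apply: um_Fs.
  - move=> x hx; exists 0%N => j _; apply: (eps_mono _ hx) => y hy.
    by apply/FsP => k _; apply: hy.
  - move=> x; rewrite /E setC_bigcap -eps_cup => -[k _ hk].
    exists k => j kj; apply: (eps_mono _ hk) => y nT hF; apply: nT.
    by move/FsP : hF; apply.
pose G := \bigcup_n E n.
have umG : um G by apply: um_bigcup.
have bG N : r G <= m + (N.+1%:R)^-1.
  apply: (@lsc_r _ (fun j => E (N + j)%N)) => //.
  - move=> x; rewrite /G -eps_cup => -[n0 _ hx].
    exists n0 => j n0j; apply: (eps_mono _ hx) => y hy k _.
    have e : (N + j + k = n0 + (N + j - n0 + k))%N.
      have : (n0 <= N + j)%N by rewrite (leq_trans n0j) // leq_addl.
      lia.
    by rewrite e; apply: hy.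
  - move=> x hx; exists 0%N => j _; apply: (eps_mono _ hx) => y nG hE.
    by apply: nG; exists (N + j)%N.
  - move=> j; apply: (le_trans (bE (N + j)%N)).
    by rewrite lerD2l inv_le // leq_addr.
have rGm : r G <= m.
  rewrite leNgt; apply/negP => lt.
  pose e := r G - m.
  have e0 : 0 < e by rewrite /e subr_gt0.
  have := truncnS_gt (e^-1).
  set N := Num.Def.trunc _ => hN.
  have hNe : (N.+1%:R)^-1 < e.
    by rewrite -[e]invrK ltf_pV2 ?posrE ?ltr0n ?invr_gt0.
  have := bG N; rewrite /e in hNe; move: hNe lt.
  set a := (N.+1%:R)^-1; clearbody a; lra.
exists G; split => // S hS.
rewrite (RkrE umG) (RkrE hS) lee_fin.
exact: le_trans rGm (m_le hS).
Qed.

End Main.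

Unset Implicit Arguments.

Theorem theorem10 (R : realType) (X : pseudoPMetricType R)
  (Xhaus : hausdorff_space X) (Xsep : separable_space X)
  (P : probability (borel_type X) R)
  (eta : X -> R)
  (eta_meas : measurable_fun setT (eta : borel_type X -> R))
  (eta01 : forall x, 0 <= eta x <= 1)
  (eps : set X -> set X)
  (eps_U : forall A, universally_measurable R A ->
                     universally_measurable R (eps A))
  (eps_cup : forall A : nat -> set X,
     \bigcup_n eps (A n) = eps (\bigcup_n A n))
  (eps_cap : forall A : nat -> set X,
     eps (\bigcap_n A n) `<=` \bigcap_n eps (A n))
  (Hseq : forall B : nat -> set X,
     (forall n, universally_measurable R (B n)) ->
     (forall n, B n.+1 `<=` B n) ->
     (adv_risk P eta eps \o B) @ \oo -->
        ereal_inf [set adv_risk P eta eps S | S in @universally_measurable R X] ->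
     exists C : nat -> set X,
       (forall n, universally_measurable R (C n)) /\
       (forall n, C n.+1 `<=` C n) /\
       (adv_risk P eta eps \o C) @ \oo -->
          ereal_inf [set adv_risk P eta eps S | S in @universally_measurable R X] /\
       (completed_P P).-negligible
          ((\bigcap_n eps (C n)) `\` eps (\bigcap_n C n))) :
  exists A : set X, universally_measurable R A /\
    forall S : set X, universally_measurable R S ->
      (adv_risk P eta eps A <= adv_risk P eta eps S)%E.
Proof.
exact: (@exists_min R X P eta eta_meas eta01 eps eps_U eps_cup).
Qed.
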